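(* For every $i\in\{1,\dots,n-1\}$ one has in $SB_n^+$ $$\sigma_i\Delta\doteq\Delta\,\sigma_{n-i},\qquad x_i\Delta\doteq \Delta\, x_{n-i},$$ i.e. $\sigma_i\Delta\doteq\Delta\mathcal R(\sigma_i)$ and $x_i\Delta\doteq\Delta\mathcal R(x_i)$.
   Context: Fix $n\ge 2$. The positive singular braid monoid $SB_n^+$ is the monoid with generators $\sigma_1,\dots,\sigma_{n-1},x_1,\dots,x_{n-1}$ and relations: $\sigma_i\sigma_j=\sigma_j\sigma_i$ and $x_ix_j=x_jx_i$ if $|i-j|>1$; $x_i\sigma_j=\sigma_jx_i$ if $|i-j|\ne 1$; $\sigma_i\sigma_{i+1}\sigma_i=\sigma_{i+1}\sigma_i\sigma_{i+1}$; $\sigma_i\sigma_{i+1}x_i=x_{i+1}\sigma_i\sigma_{i+1}$; $\sigma_{i+1}\sigma_ix_{i+1}=x_i\sigma_{i+1}\sigma_i$. For positive words (words in $\sigma_i,x_i$), $A\doteq B$ means they represent the same element of $SB_n^+$. Garside's fundamental word is $\Delta\equiv\Pi_{n-1}\Pi_{n-2}\cdots\Pi_1$ where $\Pi_t\equiv\sigma_1\sigma_2\cdots\sigma_t$, i.e. $\Delta\equiv\sigma_1\cdots\sigma_{n-1}\sigma_1\cdots\sigma_{n-2}\cdots\sigma_1\sigma_2\sigma_1$. $\mathcal R$ is the letter substitution $\sigma_i\mapsto\sigma_{n-i}$, $x_i\mapsto x_{n-i}$. *)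

(* Defs.v *)
From Stdlib Require Import List Arith.
Import ListNotations.

(* Positive singular braid monoid SB_n^+ presented by generators and relations.
   Letters: Sig i = sigma_i, X i = x_i (valid for 1 <= i <= n-1). *)
Inductive letter : Type :=
| Sig : nat -> letter
| X : nat -> letter.

Definition word := list letter.

Definition gen_ok (n i : nat) : Prop := 1 <= i /\ i <= n - 1.

Inductive sb_rel (n : nat) : word -> word -> Prop :=
| r_ss : forall i j, gen_ok n i -> gen_ok n j -> i - j > 1 \/ j - i > 1 ->
    sb_rel n [Sig i; Sig j] [Sig j; Sig i]
| r_xx : forall i j, gen_ok n i -> gen_ok n j -> i - j > 1 \/ j - i > 1 ->
    sb_rel n [X i; X j] [X j; X i]
| r_xs : forall i j, gen_ok n i -> gen_ok n j -> i - j <> 1 -> j - i <> 1 ->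
    sb_rel n [X i; Sig j] [Sig j; X i]
| r_sss : forall i, gen_ok n i -> gen_ok n (S i) ->
    sb_rel n [Sig i; Sig (S i); Sig i] [Sig (S i); Sig i; Sig (S i)]
| r_ssx : forall i, gen_ok n i -> gen_ok n (S i) ->
    sb_rel n [Sig i; Sig (S i); X i] [X (S i); Sig i; Sig (S i)]
| r_ssx' : forall i, gen_ok n i -> gen_ok n (S i) ->
    sb_rel n [Sig (S i); Sig i; X (S i)] [X i; Sig (S i); Sig i].

Inductive sb_eq (n : nat) : word -> word -> Prop :=
| sb_refl : forall w, sb_eq n w w
| sb_sym : forall u v, sb_eq n u v -> sb_eq n v u
| sb_trans : forall u v w, sb_eq n u v -> sb_eq n v w -> sb_eq n u w
| sb_step : forall p q l r, sb_rel n l r -> sb_eq n (p ++ l ++ q) (p ++ r ++ q).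

Definition Pi (t : nat) : word := map (fun k => Sig (S k)) (seq 0 t).

Fixpoint Delta_aux (t : nat) : word :=
  match t with
  | 0 => []
  | S t' => Pi (S t') ++ Delta_aux t'
  end.

Definition Delta (n : nat) : word := Delta_aux (n - 1).

Definition Rlet (n : nat) (a : letter) : letter :=
  match a with
  | Sig i => Sig (n - i)
  | X i => X (n - i)
  end.

(* Main.v *)
Require Import Defs.
From Stdlib Require Import List Arith Lia.
Import ListNotations.

Lemma sb_app n u v p q : sb_eq n u v -> sb_eq n (p++u++q) (p++v++q).
Proof.
  intros H; induction H.
  - apply sb_refl.
  - now apply sb_sym.
  - eapply sb_trans; eauto.
  - assert (E: forall x, p ++ (p0 ++ x ++ q0) ++ q = (p ++ p0) ++ x ++ (q0 ++ q))
      by (intros; now rewrite !app_assoc).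
    rewrite !E. now apply sb_step.
Qed.

Lemma sb_cat n u u' v v' : sb_eq n u u' -> sb_eq n v v' -> sb_eq n (u++v) (u'++v').
Proof.
  intros H1 H2. apply sb_trans with (u'++v).
  - pose proof (sb_app n u u' [] v H1). simpl in H. exact H.
  - pose proof (sb_app n v v' u' [] H2). rewrite !app_nil_r in H. exact H.
Qed.

Lemma sb_of_rel n l r : sb_rel n l r -> sb_eq n l r.
Proof. intros H. pose proof (sb_step n [] [] l r H). simpl in H0. now rewrite !app_nil_r in H0. Qed.

Lemma sb_commute n a w : (forall b, In b w -> sb_eq n [a;b] [b;a]) -> sb_eq n (a::w) (w++[a]).
Proof.
  induction w as [|b w IH]; intros H; simpl.
  - apply sb_refl.
  - apply sb_trans with (b :: a :: w).
    + apply (sb_cat n [a;b] [b;a] w w). apply H; now left. apply sb_refl.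
    + apply (sb_cat n [b] [b] (a::w) (w++[a])). apply sb_refl.
      apply IH. intros; apply H; now right.
Qed.

Definition isgen (g : nat -> letter) := g = Sig \/ g = X.

Section G.
Variable n : nat.
Variable g : nat -> letter.
Hypothesis hg : isgen g.

Lemma gcomm i j : gen_ok n i -> gen_ok n j -> (i-j>1 \/ j-i>1) -> sb_eq n [g i; Sig j] [Sig j; g i].
Proof.
  intros. destruct hg; subst; apply sb_of_rel; constructor; auto; lia.
Qed.

Lemma gbraid1 i : gen_ok n i -> gen_ok n (S i) ->
  sb_eq n [g (S i); Sig i; Sig (S i)] [Sig i; Sig (S i); g i].
Proof. intros. destruct hg; subst; apply sb_sym, sb_of_rel; constructor; auto. Qed.

Lemma gbraid2 i : gen_ok n i -> gen_ok n (S i) ->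
  sb_eq n [g i; Sig (S i); Sig i] [Sig (S i); Sig i; g (S i)].
Proof.
  intros. destruct hg; subst.
  - apply sb_of_rel; constructor; auto.
  - apply sb_sym, sb_of_rel; constructor; auto.
Qed.

Lemma g1 : gen_ok n 1 -> sb_eq n [g 1; Sig 1] [Sig 1; g 1].
Proof. intros. destruct hg; subst. apply sb_refl. apply sb_of_rel; constructor; auto; lia. Qed.

Lemma Pi_S t : Pi (S t) = Pi t ++ [Sig (S t)].
Proof. unfold Pi. now rewrite seq_S, map_app. Qed.

Lemma Pi_in t a : In a (Pi t) -> exists j, a = Sig j /\ 1 <= j <= t.
Proof.
  unfold Pi. intros H. apply in_map_iff in H. destruct H as [k [<- Hk]].
  apply in_seq in Hk. exists (S k). split; auto; lia.
Qed.

Lemma Delta_in t a : In a (Delta_aux t) -> exists j, a = Sig j /\ 1 <= j <= t.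
Proof.
  induction t; intros H. destruct H.
  change (Delta_aux (S t)) with (Pi (S t) ++ Delta_aux t) in H.
  apply in_app_or in H. destruct H as [H|H].
  - apply Pi_in in H. exact H.
  - destruct (IHt H) as [j [? ?]]. exists j; split; auto; lia.
Qed.

Fixpoint Rw (t : nat) : word :=
  match t with 0 => [] | S t' => Sig (S t') :: Rw t' end.

Lemma Rw_in t a : In a (Rw t) -> exists j, a = Sig j /\ 1 <= j <= t.
Proof.
  induction t; simpl; intros H. contradiction.
  destruct H as [<-|H]. exists (S t); split; auto; lia.
  destruct (IHt H) as [j [? ?]]. exists j; split; auto; lia.
Qed.

Lemma L1 t i : 1 <= i -> i < t -> t <= n - 1 ->
  sb_eq n ([g (S i)] ++ Pi t) (Pi t ++ [g i]).
Proof.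
  induction t; intros Hi Hit Htn. lia.
  rewrite Pi_S.
  destruct (Nat.eq_dec i t) as [<-|Hne].
  - destruct i as [|i']. lia. rewrite Pi_S.
    replace ([g (S (S i'))] ++ (Pi i' ++ [Sig (S i')]) ++ [Sig (S (S i'))])
      with ((g (S (S i')) :: Pi i') ++ [Sig (S i'); Sig (S (S i'))])
      by (simpl; now rewrite <- !app_assoc).
    replace (((Pi i' ++ [Sig (S i')]) ++ [Sig (S (S i'))]) ++ [g (S i')])
      with (Pi i' ++ [Sig (S i'); Sig (S (S i')); g (S i')])
      by (now rewrite <- !app_assoc).
    apply sb_trans with ((Pi i' ++ [g (S (S i'))]) ++ [Sig (S i'); Sig (S (S i'))]).
    + apply sb_cat; [|apply sb_refl].
      apply sb_commute. intros b Hb. apply Pi_in in Hb. destruct Hb as [j [-> Hj]].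
      apply gcomm; unfold gen_ok; lia.
    + rewrite <- app_assoc. apply sb_cat. apply sb_refl. apply gbraid1; unfold gen_ok; lia.
  - assert (i < t) by lia.
    apply sb_trans with ((Pi t ++ [g i]) ++ [Sig (S t)]).
    + rewrite app_assoc. apply sb_cat; [apply IHt; lia | apply sb_refl].
    + rewrite <- !app_assoc. apply sb_cat. apply sb_refl.
      apply gcomm; unfold gen_ok; lia.
Qed.

End G.

Lemma Dfac n t : S t <= n - 1 -> sb_eq n (Delta_aux (S t)) (Delta_aux t ++ Rw (S t)).
Proof.
  induction t; intros Ht.
  - simpl. apply sb_refl.
  - change (Delta_aux (S (S t))) with (Pi (S (S t)) ++ Delta_aux (S t)).
    apply sb_trans with (Pi (S (S t)) ++ Delta_aux t ++ Rw (S t)).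
    + apply sb_cat. apply sb_refl. apply IHt; lia.
    + rewrite Pi_S. change (Delta_aux (S t)) with (Pi (S t) ++ Delta_aux t).
      rewrite <- !app_assoc. apply sb_cat. apply sb_refl.
      change (Rw (S (S t))) with ([Sig (S (S t))] ++ Rw (S t)).
      rewrite !app_assoc. apply sb_cat; [|apply sb_refl].
      apply sb_commute. intros b Hb. apply Delta_in in Hb. destruct Hb as [j [-> Hj]].
      apply sb_of_rel. constructor; unfold gen_ok; lia.
Qed.

Lemma mainT n g : isgen g -> forall t i, t <= n - 1 -> 1 <= i <= t ->
  sb_eq n ([g i] ++ Delta_aux t) (Delta_aux t ++ [g (t + 1 - i)]).
Proof.
  intros hg t. induction t as [|t' IH]; intros i Ht Hi. lia.
  destruct i as [|i']. lia.
  destruct i' as [|i''].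
  - destruct t' as [|t''].
    + simpl. apply g1; auto; unfold gen_ok; lia.
    + replace (S (S t'') + 1 - 1) with (S (S t'')) by lia.
      apply sb_trans with ([g 1] ++ Delta_aux (S t'') ++ Rw (S (S t''))).
      { apply sb_cat. apply sb_refl. apply Dfac; lia. }
      apply sb_trans with ((Delta_aux (S t'') ++ Rw (S (S t''))) ++ [g (S (S t''))]).
      2:{ apply sb_cat; [|apply sb_refl]. apply sb_sym, Dfac; lia. }
      rewrite app_assoc.
      apply sb_trans with ((Delta_aux (S t'') ++ [g (S t'')]) ++ Rw (S (S t''))).
      { apply sb_cat; [|apply sb_refl].
        specialize (IH 1 ltac:(lia) ltac:(lia)).
        replace (S t'' + 1 - 1) with (S t'') in IH by lia. exact IH. }
      rewrite <- !app_assoc. apply sb_cat. apply sb_refl.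
      simpl.
      change (g (S t'') :: Sig (S (S t'')) :: Sig (S t'') :: Rw t'')
        with ([g (S t''); Sig (S (S t'')); Sig (S t'')] ++ Rw t'').
      apply sb_trans with ([Sig (S (S t'')); Sig (S t''); g (S (S t''))] ++ Rw t'').
      { apply sb_cat; [|apply sb_refl]. apply gbraid2; auto; unfold gen_ok; lia. }
      change ([Sig (S (S t'')); Sig (S t''); g (S (S t''))] ++ Rw t'')
        with ([Sig (S (S t'')); Sig (S t'')] ++ (g (S (S t'')) :: Rw t'')).
      change (Sig (S (S t'')) :: Sig (S t'') :: Rw t'' ++ [g (S (S t''))])
        with ([Sig (S (S t'')); Sig (S t'')] ++ (Rw t'' ++ [g (S (S t''))])).
      apply sb_cat. apply sb_refl. apply sb_commute.
      intros b Hb. apply Rw_in in Hb. destruct Hb as [j [-> Hj]].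
      apply gcomm; auto; unfold gen_ok; lia.
  - change (Delta_aux (S t')) with (Pi (S t') ++ Delta_aux t').
    apply sb_trans with ((Pi (S t') ++ [g (S i'')]) ++ Delta_aux t').
    { rewrite app_assoc. apply sb_cat; [|apply sb_refl]. apply L1; auto; lia. }
    rewrite <- !app_assoc. apply sb_cat. apply sb_refl.
    replace (S t' + 1 - S (S i'')) with (t' + 1 - S i'') by lia.
    apply IH; lia.
Qed.

Theorem proposition2p3 (n : nat) (hn : 2 <= n) (i : nat) (hi1 : 1 <= i) (hi2 : i <= n - 1) :
  sb_eq n ([Sig i] ++ Delta n) (Delta n ++ [Rlet n (Sig i)]) /\
  sb_eq n ([X i] ++ Delta n) (Delta n ++ [Rlet n (X i)]).
Proof.
  unfold Delta, Rlet. replace (n - i) with (n - 1 + 1 - i) by lia.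
  split; apply mainT; unfold isgen; auto; lia.
Qed.
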